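(* Assume $g$ satisfies (Hg). Let $a\in(0,1)$ and $k>1$, and define $$d^+(a,k):=\max_{y\in(1-a,1)}\frac{-g(1-y;a)}{ky},\qquad d^*(a,k):=(1-k^{-1/2})^{-2}\,d^+(a,k).$$ Then for every $d>d^*(a,k)$ we have $c(a,d,k)<0$.
   Context: A function $g:\mathbb R\times[0,1]\to\mathbb R$, $(u,a)\mapsto g(u;a)$, satisfies (Hg) if it is $C^1$ and for every $a\in(0,1)$: $g(0;a)=g(a;a)=g(1;a)=0$, $g'(0;a)<0$, $g'(1;a)<0$, $g'(a;a)>0$ (where $g'=\partial_u g$), $g(v;a)>0$ for $v\in(-\infty,0)\cup(a,1)$ and $g(v;a)<0$ for $v\in(0,a)\cup(1,\infty)$. For $k>0$, $a\in(0,1)$, $d>0$ consider the traveling wave problem: find $c\in\mathbb R$ and $\Phi:\mathbb R\to\mathbb R$ with $$-c\Phi'(\xi)=d\big(k\Phi(\xi+1)-(k+1)\Phi(\xi)+\Phi(\xi-1)\big)+g(\Phi(\xi);a)\quad(\xi\in\mathbb R),\qquad \lim_{\xi\to-\infty}\Phi(\xi)=0,\ \lim_{\xi\to+\infty}\Phi(\xi)=1.$$ It is known (Mallet-Paret) that under (Hg) this problem has a solution with $\Phi$ non-decreasing and that the speed $c$ is uniquely determined; it is denoted $c(a,d,k)$. *)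

(* Defs.v *)
From Stdlib Require Import Reals Lra.
Open Scope R_scope.

Definition cont_on_strip (F : R -> R -> R) : Prop :=
  forall u a, 0 <= a <= 1 -> forall eps, 0 < eps -> exists delta, 0 < delta /\
    forall v b, 0 <= b <= 1 -> Rabs (v - u) < delta -> Rabs (b - a) < delta ->
      Rabs (F v b - F u a) < eps.

(* g is C^1 on R x [0,1]: partial derivatives gu = d/du g and ga = d/da g
   exist everywhere on R x [0,1] (the one in a taken within [0,1], i.e.
   one-sided at a = 0, 1) and are continuous on R x [0,1]. *)
Definition C1_strip (g gu : R -> R -> R) : Prop :=
  exists ga : R -> R -> R,
    (forall u a, 0 <= a <= 1 -> derivable_pt_lim (fun v => g v a) u (gu u a)) /\
    (forall u a, 0 <= a <= 1 -> forall eps, 0 < eps -> exists delta, 0 < delta /\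
       forall b, 0 <= b <= 1 -> b <> a -> Rabs (b - a) < delta ->
         Rabs ((g u b - g u a) / (b - a) - ga u a) < eps) /\
    cont_on_strip gu /\ cont_on_strip ga /\ cont_on_strip g.

Definition Hg (g : R -> R -> R) : Prop :=
  exists gu : R -> R -> R,
    C1_strip g gu /\
    forall a, 0 < a < 1 ->
      g 0 a = 0 /\ g a a = 0 /\ g 1 a = 0 /\
      gu 0 a < 0 /\ gu 1 a < 0 /\ 0 < gu a a /\
      (forall v, (v < 0 \/ (a < v /\ v < 1)) -> 0 < g v a) /\
      (forall v, ((0 < v /\ v < a) \/ 1 < v) -> g v a < 0).

(* Phi' is required to exist (and to be the function Dphi) whenever c <> 0;
   when c = 0 the term -c Phi' vanishes and no differentiability is needed. *)
Definition TW_solution (g : R -> R -> R) (k a d c : R) (Phi : R -> R) : Prop :=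
  (exists Dphi : R -> R,
     (c <> 0 -> forall xi, derivable_pt_lim Phi xi (Dphi xi)) /\
     forall xi,
       - c * Dphi xi =
       d * (k * Phi (xi + 1) - (k + 1) * Phi xi + Phi (xi - 1)) + g (Phi xi) a) /\
  (forall eps, 0 < eps -> exists M, forall xi, xi < M -> Rabs (Phi xi) < eps) /\
  (forall eps, 0 < eps -> exists M, forall xi, M < xi -> Rabs (Phi xi - 1) < eps).

Definition nondecreasing (Phi : R -> R) : Prop :=
  forall x y, x <= y -> Phi x <= Phi y.

Definition is_dplus (g : R -> R -> R) (a k dp : R) : Prop :=
  (exists y, 1 - a < y < 1 /\ - g (1 - y) a / (k * y) = dp) /\
  (forall y, 1 - a < y < 1 -> - g (1 - y) a / (k * y) <= dp).

Definition dstar (dp k : R) : R := / (1 - / sqrt k) ^ 2 * dp.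

(* Main.v *)
Require Import Defs.
From Stdlib Require Import Reals Lra Lia ZArith.
Open Scope R_scope.

Lemma nat_unbounded (r : R) : exists n : nat, r < INR n.
Proof.
  destruct (archimed (Rabs r)) as [H1 _].
  exists (Z.to_nat (up (Rabs r))).
  rewrite INR_IZR_INZ. rewrite Z2Nat.id.
  - pose proof (Rle_abs r). lra.
  - apply le_IZR. pose proof (Rabs_pos r). lra.
Qed.

Lemma bernoulli_ (s : R) (n : nat) : 1 <= s -> 1 + INR n * (s - 1) <= s ^ n.
Proof.
  intros Hs. induction n as [|n IH].
  - simpl. lra.
  - rewrite S_INR. simpl.
    assert (0 <= INR n) by apply pos_INR.
    assert (0 <= INR n * (s-1)) by (apply Rmult_le_pos; lra).
    nra.
Qed.

Lemma deriv_nondec (f : R -> R) (x l : R) :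
  nondecreasing f -> derivable_pt_lim f x l -> 0 <= l.
Proof.
  intros Hm Hd. destruct (Rle_or_lt 0 l) as [|Hl]; auto. exfalso.
  destruct (Hd (-l/2)) as [delta Hdel]; [lra|].
  pose proof (cond_pos delta) as Hpos.
  assert (Hh : delta/2 <> 0) by lra.
  assert (Hh2 : Rabs (delta/2) < delta) by (rewrite Rabs_right; lra).
  specialize (Hdel _ Hh Hh2).
  assert (Hq : 0 <= (f (x + delta/2) - f x) / (delta/2)).
  { apply Rmult_le_pos. assert (f x <= f (x + delta/2)) by (apply Hm; lra). lra.
    left. apply Rinv_0_lt_compat. lra. }
  revert Hdel. set (q := (f (x + delta/2) - f x) / (delta/2)).
  intros Hdel. fold q in Hq. pose proof (Rle_abs (q - l)). lra.
Qed.

Lemma find_cross (Phi : R -> R) (a x1 : R) (N : nat) :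
  Phi x1 < a -> a <= Phi (x1 + INR N) ->
  exists m : nat, Phi (x1 + INR m) < a /\ a <= Phi (x1 + INR m + 1).
Proof.
  intros H0. induction N as [|N IH].
  - simpl. rewrite Rplus_0_r. intros; exfalso; lra.
  - intros HN. destruct (Rlt_or_le (Phi (x1 + INR N)) a) as [Hl|Hl].
    + exists N. split; auto. rewrite S_INR in HN. rewrite <- Rplus_assoc in HN. auto.
    + apply IH; auto.
Qed.

Theorem theorem2p5 (g : R -> R -> R) (a k dp : R) :
  Hg g -> 0 < a < 1 -> 1 < k -> is_dplus g a k dp ->
  forall d, dstar dp k < d ->
  forall (c : R) (Phi : R -> R),
    nondecreasing Phi -> TW_solution g k a d c Phi -> c < 0.
Proof.
  intros HG Ha Hk Hdp d Hd c Phi Hmon [[Dphi [HD Heq]] [Hlim0 Hlim1]].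
  destruct (Rlt_or_le c 0) as [|Hc]; [assumption| exfalso].
  destruct HG as [gu [_ Hga]].
  destruct (Hga a Ha) as [Hg0 [Hga0 [Hg1 [_ [_ [_ [Hpos Hneg]]]]]]].
  assert (HA : forall xi, d*(k*Phi(xi+1) - (k+1)*Phi xi + Phi(xi-1)) + g (Phi xi) a <= 0).
  { intros xi. rewrite <- Heq. destruct (Req_dec c 0) as [E|E].
    - rewrite E. lra.
    - pose proof (deriv_nondec Phi xi (Dphi xi) Hmon (HD E xi)). nra. }
  assert (HB : forall x, 0 <= Phi x <= 1).
  { intros x. split.
    - destruct (Rle_or_lt 0 (Phi x)) as [|Hl]; auto. exfalso.
      destruct (Hlim0 (- Phi x)) as [M HM]; [lra|].
      set (z := Rmin M x - 1).
      assert (z < M) by (unfold z; pose proof (Rmin_l M x); lra).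
      assert (z <= x) by (unfold z; pose proof (Rmin_r M x); lra).
      specialize (HM z H). pose proof (Hmon z x H0).
      pose proof (Rabs_left1 (Phi z)). rewrite H2 in HM; lra.
    - destruct (Rle_or_lt (Phi x) 1) as [|Hl]; auto. exfalso.
      destruct (Hlim1 (Phi x - 1)) as [M HM]; [lra|].
      set (z := Rmax M x + 1).
      assert (M < z) by (unfold z; pose proof (Rmax_l M x); lra).
      assert (x <= z) by (unfold z; pose proof (Rmax_r M x); lra).
      specialize (HM z H). pose proof (Hmon x z H0).
      rewrite Rabs_right in HM; lra. }
  destruct Hdp as [[y0 [Hy0 Hy0eq]] Hyle].
  assert (Hdp0 : 0 < dp).
  { rewrite <- Hy0eq. apply Rdiv_lt_0_compat.
    - assert (g (1 - y0) a < 0) by (apply Hneg; left; lra). lra.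
    - apply Rmult_lt_0_compat; lra. }
  set (s := sqrt k).
  assert (Hss : s * s = k) by (apply sqrt_sqrt; lra).
  assert (Hs1 : 1 < s).
  { destruct (Rle_or_lt s 1) as [Hl|Hl]; auto. exfalso.
    assert (0 <= s) by apply sqrt_pos. nra. }
  assert (Hkd : k * dp < d * (s - 1) ^ 2).
  { unfold dstar in Hd. fold s in Hd.
    assert (Hne : 0 < (1 - / s) ^ 2).
    { assert (/ s < 1). { rewrite <- Rinv_1. apply Rinv_lt_contravar; lra. }
      apply pow_lt. lra. }
    assert (dp < d * (1 - /s)^2).
    { apply (Rmult_lt_compat_r ((1 - /s)^2)) in Hd; auto.
      replace (/ (1 - / s) ^ 2 * dp * (1 - / s) ^ 2) with dp in Hd; auto.
      assert (s - 1 <> 0) by lra. assert (s <> 0) by lra. field; auto. }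
    replace (d * (s-1)^2) with (k * (d * (1 - /s)^2)).
    - apply Rmult_lt_compat_l; lra.
    - rewrite <- Hss. field. lra. }
  assert (Hd0 : 0 < d) by (assert (0 < k * dp) by (apply Rmult_lt_0_compat; lra); assert (0 <= (s-1)^2) by (apply pow2_ge_0); destruct (Rle_or_lt d 0); [nra|lra]).
  assert (HC : forall u, 0 <= u <= 1 -> - g u a <= dp * k * (1 - u)).
  { intros u Hu.
    assert (Hpr : 0 <= dp * k * (1 - u)) by (apply Rmult_le_pos; [apply Rmult_le_pos|]; lra).
    destruct (Rtotal_order u 0) as [Hl|[He|Hg']]; [lra| rewrite He in *; rewrite Hg0; lra|].
    destruct (Rtotal_order u a) as [Hl|[He|Hg2]].
    - specialize (Hyle (1 - u) ltac:(lra)).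
      replace (1 - (1 - u)) with u in Hyle by ring.
      assert (0 < k * (1 - u)) by (apply Rmult_lt_0_compat; lra).
      replace (- g u a) with ((- g u a / (k * (1 - u))) * (k * (1 - u))) by (field; lra).
      replace (dp * k * (1 - u)) with (dp * (k * (1 - u))) by ring.
      apply Rmult_le_compat_r; lra.
    - rewrite He in *; rewrite Hga0. lra.
    - destruct (Rtotal_order u 1) as [Hl|[He|Hg3]]; [|rewrite He in *; rewrite Hg1; lra| lra].
      assert (0 < g u a) by (apply Hpos; right; lra). lra. }
  assert (HF : forall y, s * (1 - Phi (y+1)) < 1 - Phi y -> s * (1 - Phi y) < 1 - Phi (y-1)).
  { intros y Hy.
    pose proof (HA y) as HAy. pose proof (HC (Phi y) (HB y)) as HCy.
    pose proof (HB y).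
    assert (E1 : d * ((k+1) * (1 - Phi y) - k * (1 - Phi (y+1)) - (1 - Phi (y-1))) <= dp * k * (1 - Phi y)).
    { assert (d * ((k+1) * (1 - Phi y) - k * (1 - Phi (y+1)) - (1 - Phi (y-1))) = d * (k * Phi (y + 1) - (k + 1) * Phi y + Phi (y - 1))) by ring. lra. }
    assert (HW0p : 0 <= 1 - Phi y) by lra.
    set (W0 := 1 - Phi y) in *. set (W1 := 1 - Phi (y+1)) in *. set (Wm := 1 - Phi (y-1)) in *.
    assert (E2 : d * k * W1 < d * s * W0).
    { rewrite <- Hss. replace (d * (s * s) * W1) with ((d * s) * (s * W1)) by ring.
      replace (d * s * W0) with ((d*s) * W0) by ring.
      apply Rmult_lt_compat_l; [apply Rmult_lt_0_compat; lra| lra]. }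
    assert (E3 : 0 <= (d * (s-1)^2 - k * dp) * W0) by (apply Rmult_le_pos; lra).
    assert (d * (s * W0) < d * Wm).
    { assert (E4 : (d * (s-1)^2 - k * dp) * W0 = d*(k+1)*W0 - 2*d*s*W0 - dp*k*W0) by (rewrite <- Hss; ring).
      assert (E5 : d * ((k+1) * W0 - k * W1 - Wm) = d*(k+1)*W0 - d*k*W1 - d*Wm) by ring.
      assert (E6 : d * (s * W0) = d*s*W0) by ring.
      lra. }
    apply (Rmult_lt_reg_l d); auto. }
  destruct (Hlim0 a) as [M0 HM0]; [lra|].
  destruct (Hlim1 (1 - a)) as [M1 HM1]; [lra|].
  set (x1 := M0 - 1).
  assert (Hx1 : Phi x1 < a).
  { specialize (HM0 x1 ltac:(unfold x1; lra)). pose proof (Rle_abs (Phi x1)). lra. }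
  destruct (nat_unbounded (M1 - x1)) as [N HN].
  assert (HxN : a <= Phi (x1 + INR N)).
  { specialize (HM1 (x1 + INR N) ltac:(lra)).
    rewrite Rabs_left1 in HM1; [lra|]. pose proof (HB (x1 + INR N)). lra. }
  destruct (find_cross Phi a x1 N Hx1 HxN) as [m [Hm1 Hm2]].
  set (x0 := x1 + INR m) in *.
  assert (HR : forall y, x0 + 1 <= y -> k * Phi (y+1) - (k+1) * Phi y + Phi (y-1) <= 0).
  { intros y Hy. pose proof (Hmon _ _ Hy). pose proof (HB y).
    assert (0 <= g (Phi y) a).
    { destruct (Rtotal_order (Phi y) a) as [Hl|[He|Hg']]; [lra| rewrite He; lra|].
      destruct (Rtotal_order (Phi y) 1) as [Hl|[He|Hg3]]; [|rewrite He; lra| lra].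
      left. apply Hpos. right. lra. }
    pose proof (HA y).
    destruct (Rle_or_lt (k * Phi (y+1) - (k+1) * Phi y + Phi (y-1)) 0); auto. nra. }
  assert (HT : forall J : nat, k * (Phi (x0 + INR J + 1) - Phi (x0 + 1)) <= Phi (x0 + INR J) - Phi x0).
  { induction J as [|J IH].
    - simpl. rewrite !Rplus_0_r. lra.
    - assert (H1 : x0 + 1 <= x0 + INR J + 1) by (pose proof (pos_INR J); lra).
      specialize (HR _ H1).
      replace (x0 + INR J + 1 - 1) with (x0 + INR J) in HR by ring.
      rewrite S_INR. replace (x0 + (INR J + 1) + 1) with (x0 + INR J + 1 + 1) by ring.
      replace (x0 + (INR J + 1)) with (x0 + INR J + 1) by ring. lra. }
  assert (Hbase : s * (1 - Phi (x0 + 1)) < 1 - Phi x0).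
  { destruct (Rlt_or_le (s * (1 - Phi (x0 + 1))) (1 - Phi x0)) as [|Hl]; auto. exfalso.
    set (eta := (s - 1) * (1 - a) / (k - 1)).
    assert (Heta : 0 < eta) by (apply Rdiv_lt_0_compat; nra).
    destruct (Hlim1 eta Heta) as [M2 HM2].
    destruct (nat_unbounded (M2 - x0)) as [J HJ].
    specialize (HM2 (x0 + INR J + 1) ltac:(lra)).
    specialize (HT J).
    assert (Phi (x0 + INR J) <= Phi (x0 + INR J + 1)) by (apply Hmon; lra).
    pose proof (HB (x0 + INR J + 1)).
    rewrite Rabs_left1 in HM2 by lra.
    assert (HW0 : 1 - a < 1 - Phi x0) by lra.
    assert (s * (1 - Phi x0) <= k * (1 - Phi (x0 + 1))).
    { rewrite <- Hss. nra. }
    assert (eta * (k - 1) = (s - 1) * (1 - a)) by (unfold eta; field; lra).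
    nra. }
  assert (HP : forall j : nat, s * (1 - Phi (x0 - INR j + 1)) < 1 - Phi (x0 - INR j)).
  { induction j as [|j IH].
    - simpl. replace (x0 - 0) with x0 by ring. auto.
    - rewrite S_INR. replace (x0 - (INR j + 1) + 1) with (x0 - INR j) by ring.
      replace (x0 - (INR j + 1)) with (x0 - INR j - 1) by ring.
      apply HF. auto. }
  assert (HQ : forall j : nat, s ^ j * (1 - Phi x0) <= 1 - Phi (x0 - INR j)).
  { induction j as [|j IH].
    - simpl. replace (x0 - 0) with x0 by ring. lra.
    - pose proof (HP (S j)) as HPj. rewrite S_INR in HPj |- *.
      replace (x0 - (INR j + 1) + 1) with (x0 - INR j) in HPj by ring.
      simpl. nra. }
  assert (HW0 : 0 < 1 - Phi x0) by lra.
  destruct (nat_unbounded (/ ((s - 1) * (1 - Phi x0)))) as [j Hj].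
  specialize (HQ j). pose proof (bernoulli_ s j ltac:(lra)).
  pose proof (HB (x0 - INR j)).
  assert (Hpp : 0 < (s - 1) * (1 - Phi x0)) by nra.
  assert (1 < INR j * ((s - 1) * (1 - Phi x0))).
  { apply (Rmult_lt_compat_r ((s - 1) * (1 - Phi x0))) in Hj; auto.
    rewrite Rinv_l in Hj; lra. }
  assert (0 <= INR j) by apply pos_INR.
  nra.
Qed.
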